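(* Let $\mathcal{P}$ be a set of $d$-dimensional $k$-templates and let $X$ be an infinite set. If $\mathcal{P}=\varnothing$, then $\chi(L(X^d,\mathcal{P}))=1$. If $\mathcal{P}\ne\varnothing$, then $\chi(L(X^d,\mathcal{P}))=|X|^{-(e-1)}$, where $e=\min\{e(P):P\in\mathcal{P}\}$.
   Context: A $d$-dimensional $k$-template ($2\le k<\omega$, $d<\omega$) is a set $P$ of $d$-tuples with $|P|=k$. A homomorphism between $d$-dimensional $k$-templates $P\to Q$ is a one-to-one map $f$ such that whenever $x,y\in P$, $i<d$ and $x_i=y_i$, then $f(x)_i=f(y)_i$; $Q$ is a homomorphic image of $P$ if such $f$ exists. For a set $\mathcal{P}$ of $d$-dimensional $k$-templates, $L(X^d,\mathcal{P})$ is the $k$-hypergraph with vertex set $X^d$ whose edges are the $k$-element subsets $Q\subseteq X^d$ that are homomorphic images of some $P\in\mathcal{P}$. A subset $I\subseteq d=\{0,\dots,d-1\}$ is a distinguisher for $P$ if whenever $x,y\in P$ are distinct then $x_i\ne y_i$ for some $i\in I$; $e(P)$ is the least cardinality of a distinguisher for $P$. A coloring $\varphi:V\to C$ of a $k$-hypergraph $(V,E)$ is proper if no edge is monochromatic; $\chi(H)$ is the least cardinal $\kappa$ admitting a proper $\kappa$-coloring. For an infinite cardinal $\kappa$ and $m<\omega$, $\kappa^{+m}$ is the $m$-th successor of $\kappa$, and $\kappa^{-m}$ is the least cardinal $\lambda$ with $\lambda^{+m}\ge\kappa$. *)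

(* Defs.v *)
From mathcomp Require Import all_boot.
Unset Printing Implicit Defensive.

Definition is_template (d k : nat) (P : seq (d.-tuple nat)) : Prop :=
  uniq P /\ size P = k.

Definition template_hom (d : nat) (X : Type) (P : seq (d.-tuple nat))
  (f : d.-tuple nat -> ('I_d -> X)) : Prop :=
  (forall x y, x \in P -> y \in P -> f x = f y -> x = y) /\
  (forall x y (i : 'I_d), x \in P -> y \in P -> tnth x i = tnth y i ->
      f x i = f y i).

Definition L_edge (d : nat) (X : Type) (Pc : seq (d.-tuple nat) -> Prop)
  (Q : ('I_d -> X) -> Prop) : Prop :=
  exists P f, Pc P /\ template_hom d X P f /\
    (forall q, Q q <-> exists2 x, x \in P & q = f x).

Definition proper_coloring (d : nat) (X C : Type)
  (Pc : seq (d.-tuple nat) -> Prop) (phi : ('I_d -> X) -> C) : Prop :=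
  forall Q, L_edge d X Pc Q -> ~ (exists c, forall q, Q q -> phi q = c).

Definition has_proper_coloring (d : nat) (X : Type)
  (Pc : seq (d.-tuple nat) -> Prop) (C : Type) : Prop :=
  exists phi : ('I_d -> X) -> C, proper_coloring d X C Pc phi.

(* Distinguisher and e(P): I is a distinguisher for P if distinct x, y in P
   differ at some coordinate i in I; e(P) is the least size of one
   (the full index set is always one, so d is a safe default). *)
Definition distinguisher (d : nat) (P : seq (d.-tuple nat)) (I : {set 'I_d}) : bool :=
  all (fun x => all (fun y => (x == y) || [exists i in I, tnth x i != tnth y i]) P) P.

Definition eP (d : nat) (P : seq (d.-tuple nat)) : nat :=
  \big[minn/d]_(I : {set 'I_d} | distinguisher d P I) #|I|.

Definition infinite (X : Type) : Prop :=
  ~ exists l : seq X, forall x : X, exists2 i, i < size l & nth x l i = x.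


Definition card_le (A B : Type) : Prop := exists f : A -> B, injective f.
Definition card_lt (A B : Type) : Prop := card_le A B /\ ~ card_le B A.

(* chain m A X : there are cardinals |A| < nu_1 < ... < nu_m < |X|
   (each nu_i < |X| is realized by a subset of X).  Thus
   |A|^{+m} >= |X|  <->  ~ chain m A X, i.e. |A| >= |X|^{-m} <-> ~ chain m A X. *)
Fixpoint chain (m : nat) (A X : Type) : Prop :=
  match m with
  | 0 => card_lt A X
  | m'.+1 => exists S : X -> Prop, card_lt A {x : X | S x} /\ chain m' {x : X | S x} X
  end.

(* Main.v *)
Require Import Defs.
From mathcomp Require Import all_boot.
From mathcomp Require Import boolp.
From mathcomp Require classical_sets wochoice.

Set Implicit Arguments.
Unset Strict Implicit.


Lemma cle_refl A : card_le A A. Proof. by exists id. Qed.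
Lemma cle_trans A B C : card_le A B -> card_le B C -> card_le A C.
Proof. by move=> [f fi] [g gi]; exists (g \o f); apply: inj_comp. Qed.
Lemma clt_le_trans A B C : card_lt A B -> card_le B C -> card_lt A C.
Proof.
move=> [AB nBA] BC; split; first exact: cle_trans AB BC.
by move=> CA; apply: nBA; apply: cle_trans BC CA.
Qed.
Lemma cle_lt_trans A B C : card_le A B -> card_lt B C -> card_lt A C.
Proof.
move=> AB [BC nCB]; split; first exact: cle_trans AB BC.
by move=> CA; apply: nCB; apply: cle_trans CA AB.
Qed.

Lemma sig_inj (T : Type) (P : T -> Prop) : injective (@proj1_sig T P).
Proof.
move=> [x p] [y q] /= e; subst y; congr exist; apply: Prop_irrelevance.
Qed.

Definition fin (A : Type) := exists M, card_le A 'I_M.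

Lemma fin_le A B : card_le A B -> fin B -> fin A.
Proof. by move=> AB [M BM]; exists M; apply: cle_trans AB BM. Qed.

Lemma inf_le A B : card_le A B -> ~ fin A -> ~ fin B.
Proof. by move=> AB nA fB; apply: nA; apply: fin_le AB fB. Qed.

Lemma fin_finType (T : finType) : fin T.
Proof. by exists #|T|; exists enum_rank; apply: enum_rank_inj. Qed.

Lemma cle_ord N K : card_le 'I_N 'I_K -> N <= K.
Proof. by move=> [f fi]; have := leq_card f fi; rewrite !card_ord. Qed.

Lemma inf_fin X : infinite X -> ~ fin X.
Proof.
move=> Xinf [M [f fi]]; apply: Xinf.
case: (pselect (inhabited X)) => [[x0]|nX]; last first.
  by exists [::] => x; case: nX; exists.
pose pre (i : 'I_M) : X :=
  match pselect (exists x, f x = i) with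
  | left h => proj1_sig (cid h) | right _ => x0 end.
exists (map pre (enum 'I_M)) => x.
exists (f x); first by rewrite size_map size_enum_ord.
rewrite (nth_map (f x)) ?size_enum_ord // nth_ord_enum /pre.
case: pselect => [h|[]]; last by exists x.
by case: (cid h) => y /= /fi.
Qed.

Lemma fin_notinf X : ~ infinite X -> fin X.
Proof.
move=> /contrapT [l cov].
have H x : {i : 'I_(size l) | nth x l i = x}.
  by have /cid2 [i il e] := cov x; exists (Ordinal il).
exists (size l); exists (fun x => proj1_sig (H x)) => x y.
case: (H x) => i ei; case: (H y) => j ej /= eij; subst j.
by rewrite -ei -ej; apply: set_nth_default.
Qed.

Section NatInj.
Variable Y : Type.
Hypothesis Yinf : ~ fin Y.
Local Notation W := {classic Y}.

Lemma notin_ex (s : seq W) : exists x : W, x \notin s.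
Proof.
apply: contrapT => H; apply: Yinf.
have ms (x : W) : x \in s by apply: contrapT => nx; apply: H; exists x; apply/negP.
have mem (x : W) : index x s < size s by rewrite index_mem.
exists (size s); exists (fun x : W => Ordinal (mem x)) => x y [] e.
have := nth_index (x : W) (ms x); rewrite e nth_index //.
Qed.

Definition pickn (s : seq W) : W := xchoose (notin_ex s).
Fixpoint build n : seq W := if n is n'.+1 then rcons (build n') (pickn (build n')) else [::].
Definition gnat n : W := pickn (build n).

Lemma build_map n : build n = map gnat (iota 0 n).
Proof.
elim: n => // n IH.
transitivity (rcons (map gnat (iota 0 n)) (gnat n)); first by rewrite -IH.
by rewrite -[n.+1]addn1 iotaD map_cat cats1.
Qed.

Lemma gnat_inj : injective gnat.
Proof.
have key m n : m < n -> gnat m <> gnat n.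
  move=> mn e; have : gnat n \notin build n by rewrite /gnat /pickn; exact: (xchooseP (notin_ex (build n))).
  by move=> /negP; apply; rewrite build_map -e map_f // mem_iota add0n mn leq0n.
move=> m n e; case: (ltngtP m n) => // mn; first by case: (key _ _ mn e).
by case: (key _ _ mn (esym e)).
Qed.

Lemma nat_le : card_le nat Y.
Proof. exists gnat; exact: gnat_inj. Qed.

End NatInj.

Lemma ord_le Y n : ~ fin Y -> card_le 'I_n Y.
Proof. move=> /nat_le H; apply: cle_trans H; exists val; exact: val_inj. Qed.

Lemma compare_or A B : card_le A B \/ card_le B A.
Proof.
case: (pselect (inhabited B)) => [[b0]|nB]; last first.
  right; exists (fun b => False_rect _ (nB (inhabits b))) => x.
  by case: (nB (inhabits x)).
pose Good (p : (A -> Prop) * (A -> B)) :=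
  forall x y, p.1 x -> p.1 y -> p.2 x = p.2 y -> x = y.
pose T := {p | Good p}.
pose R (s t : T) := `[< (forall x, (sval s).1 x -> (sval t).1 x) /\
   (forall x, (sval s).1 x -> (sval t).2 x = (sval s).2 x) >].
have t0 : T by exists ((fun _ => False), (fun _ => b0)) => x y [].
have [[[D f] Gt] tmax] : exists t, classical_sets.premaximal R t.
  apply: (classical_sets.ZL_preorder t0).
  - by move=> t; apply/asboolP; split.
  - move=> r s t /asboolP[rs1 rs2] /asboolP[st1 st2]; apply/asboolP.
    split => x hx; first by apply/st1/rs1.
    by rewrite st2 ?rs2 //; apply: rs1.
  - move=> F Ftot.
    pose D x := exists t, F t /\ (sval t).1 x.
    pose f x := match pselect (D x) with
      | left h => (sval (proj1_sig (cid h))).2 x | right _ => b0 end.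
    have fspec x (h : D x) : exists t, F t /\ (sval t).1 x /\ f x = (sval t).2 x.
      rewrite /f; case: pselect => [h'|//]; case: (cid h') => t [Ft tx] /=.
      by exists t.
    have Gu : Good (D, f).
      move=> x y /= Dx Dy; case: (fspec x Dx) => [tx [Ftx [txx ->]]].
      case: (fspec y Dy) => [ty [Fty [tyy ->]]].
      case: (Ftot _ _ Ftx Fty) => /asboolP [h1 h2].
      - by rewrite -h2 //; apply: (svalP ty) => //; exact: h1.
      - by rewrite -[X in _ = X]h2 //; apply: (svalP tx) => //; exact: h1.
    exists (exist _ (D, f) Gu) => s Fs; apply/asboolP; split => /= x hx.
      by exists s.
    case: (fspec x (ex_intro _ s (conj Fs hx))) => t [Ft [tx ->]].
    by case: (Ftot _ _ Fs Ft) => /asboolP [h1 h2]; rewrite h2.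
have Gt1 : Good (D, f) := Gt; rewrite /= in Gt1.
case: (pselect (forall a, D a)) => [Dall|nDall].
  by left; exists f => x y; apply: Gt1.
right.
have img b : exists a, D a /\ f a = b.
  apply: contrapT => nb; case: nDall => a; apply: contrapT => na.
  pose D' x := D x \/ x = a.
  pose f' x := if pselect (x = a) then b else f x.
  have G' : Good (D', f').
    move=> x y /=; rewrite /D' /f'.
    case: pselect => [xa|xa]; case: pselect => [ya|ya]; first by move=> *; rewrite xa ya.
    - by move=> _ [Dy|//] /= e; case: nb; exists y.
    - by move=> [Dx|//] _ /= e; case: nb; exists x.
    - by move=> [Dx|//] [Dy|//]; apply: Gt1.
  have := tmax (exist _ (D', f') G').
  case/(_ _)/asboolP.
    apply/asboolP; split=> x /= hx; first by left.
    by rewrite /f'; case: pselect => // xa; case: na; rewrite -xa.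
  by move=> /= h _; case: na; apply: (h a (or_intror erefl)).
exists (fun b => proj1_sig (cid (img b))) => b b' e.
have H1 := proj2_sig (cid (img b)); have H2 := proj2_sig (cid (img b')).
by rewrite -(proj2 H1) -(proj2 H2) /= e.
Qed.

Section Hess.
Variable Y : Type.
Hypothesis Yinf : ~ fin Y.

Let nn (k : nat) : Y := gnat Yinf k.
Let nn_inj : injective nn := @gnat_inj Y Yinf.
Let A0 y := exists k, nn k = y.
Let ninv y : nat := match pselect (A0 y) with
  | left h => proj1_sig (cid h) | right _ => 0 end.
Let nnK y : A0 y -> nn (ninv y) = y.
Proof. by rewrite /ninv; case: pselect => // h _; case: (cid h). Qed.
Let g0 a b := nn (pickle (ninv a, ninv b)).

Let Good (p : (Y -> Prop) * (Y -> Y -> Y)) :=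
  [/\ (forall y, A0 y -> p.1 y),
      (forall a b, p.1 a -> p.1 b -> p.1 (p.2 a b)) &
      (forall a b a' b', p.1 a -> p.1 b -> p.1 a' -> p.1 b' ->
         p.2 a b = p.2 a' b' -> a = a' /\ b = b')].

Let T := {p | Good p}.
Let R (s t : T) := `[< (forall y, (sval s).1 y -> (sval t).1 y) /\
   (forall a b, (sval s).1 a -> (sval s).1 b -> (sval t).2 a b = (sval s).2 a b) >].

Let g0_good : Good (A0, g0).
Proof.
split => //=.
- by move=> a b _ _; exists (pickle (ninv a, ninv b)).
- move=> a b a' b' Aa Ab Aa' Ab' /nn_inj /(pcan_inj (@pickleK _)) [e1 e2].
  by rewrite -(nnK Aa) -(nnK Ab) -(nnK Aa') -(nnK Ab') e1 e2.
Qed.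

Lemma hess : card_le (Y * Y) Y.
Proof.
have [[[A g] Gt] tmax] : exists t, classical_sets.premaximal R t.
  apply: (classical_sets.ZL_preorder (exist _ _ g0_good)).
  - by move=> t; apply/asboolP; split.
  - move=> r s t /asboolP[rs1 rs2] /asboolP[st1 st2]; apply/asboolP.
    split => [y hy|a b ha hb]; first by apply/st1/rs1.
    by rewrite st2 ?rs2 //; apply: rs1.
  move=> F Ftot.
  pose Au y := A0 y \/ exists t, F t /\ (sval t).1 y.
  pose gu a b := match pselect (exists t, F t /\ (sval t).1 a /\ (sval t).1 b) with
    | left h => (sval (sval (cid h))).2 a b | right _ => g0 a b end.
  have compat s t a b : F s -> F t -> (sval s).1 a -> (sval s).1 b ->
      (sval t).1 a -> (sval t).1 b -> (sval s).2 a b = (sval t).2 a b.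
    move=> Fs Ft sa sb ta tb.
    by case: (Ftot _ _ Fs Ft) => /asboolP [h1 h2]; rewrite h2.
  have inF a t0 : Au a -> F t0 -> exists t, F t /\ (sval t).1 a.
    move=> [A0a|//] Ft0; exists t0; split => //.
    by case: (svalP t0) => h _ _; apply: h.
  have spec a b : Au a -> Au b ->
     (exists t, [/\ F t, (sval t).1 a, (sval t).1 b & gu a b = (sval t).2 a b]) \/
     [/\ (forall t, ~ F t), A0 a, A0 b & gu a b = g0 a b].
    move=> Aua Aub; rewrite /gu; case: pselect => [h|nh].
      by left; case: (cid h) => t [Ft [ta tb]]; exists t.
    right.
    have nF : forall t, ~ F t.
      move=> t0 Ft0; case: (inF a t0 Aua Ft0) => ta [Fta taa].
      case: (inF b t0 Aub Ft0) => tb [Ftb tbb]; apply: nh.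
      case: (Ftot _ _ Fta Ftb) => /asboolP [h1 h2].
        by exists tb; split => //; split => //; apply: h1.
      by exists ta; split => //; split => //; apply: h1.
    split => //.
    - by case: Aua => // [[t [Ft _]]]; case: (nF t).
    - by case: Aub => // [[t [Ft _]]]; case: (nF t).
  have Gu : Good (Au, gu).
    split => /=.
    - by move=> y; left.
    - move=> a b Aua Aub; case: (spec a b Aua Aub) => [[t [Ft ta tb ->]]|[_ _ _ ->]].
        by right; exists t; split => //; case: (svalP t) => _ h _; apply: h.
      by left; exists (pickle (ninv a, ninv b)).
    - move=> a b a' b' Aua Aub Aua' Aub'.
      case: (spec a b Aua Aub) => [[t [Ft ta tb ->]]|[nF A0a A0b ->]];
      case: (spec a' b' Aua' Aub') => [[t' [Ft' ta' tb' ->]]|[nF' A0a' A0b' ->]].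
      + case: (Ftot _ _ Ft Ft') => /asboolP [h1 h2].
          rewrite -h2 //; case: (svalP t') => _ _; apply; by [apply: h1|].
        rewrite -[X in _ = X -> _]h2 //; case: (svalP t) => _ _; apply; by [apply: h1|].
      + by case: (nF' t).
      + by case: (nF t').
      + by case: g0_good => _ _; apply.
  exists (exist _ _ Gu) => s Fs; apply/asboolP; split => /= [y hy|a b ha hb].
    by right; exists s.
  case: (spec a b (or_intror (ex_intro _ s (conj Fs ha))) (or_intror (ex_intro _ s (conj Fs hb)))).
    by move=> [t [Ft ta tb ->]]; apply: compat.
  by move=> [nF _ _ _]; case: (nF s).
have Gt1 : Good (A, g) := Gt.
case: Gt1 => /= A0A gA ginj.
have c0A k : A (nn k) by apply: A0A; exists k.
case: (compare_or {y | ~ A y} {y | A y}) => [[h hinj]|[h hinj]].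
  pose j y := match pselect (A y) with
    | left _ => g y (nn 0) | right hn => g (sval (h (exist _ y hn))) (nn 1) end.
  have jA y : A (j y).
    by rewrite /j; case: pselect => [Ay|nAy]; apply: gA => //; apply: (svalP (h _)).
  have jinj : injective j.
    move=> y y'; rewrite /j; case: pselect => [Ay|nAy]; case: pselect => [Ay'|nAy'].
    - by move/ginj => [] //; apply: c0A.
    - move/ginj => [] //; try by [apply: c0A | apply: (svalP (h _))].
      by move=> _ /nn_inj.
    - move/ginj => [] //; try by [apply: c0A | apply: (svalP (h _))].
      by move=> _ /nn_inj.
    - move/ginj => [] //; try by [apply: c0A | apply: (svalP (h _))].
      by move/sig_inj/hinj/(congr1 sval).
  exists (fun p => g (j p.1) (j p.2)) => [[a b] [a' b']] /= /ginj [] //.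
  by move=> /jinj -> /jinj ->.
exfalso.
pose hY y := match pselect (A y) with
  | left p => sval (h (exist _ y p)) | right _ => y end.
have hY_nA y : A y -> ~ A (hY y).
  by rewrite /hY; case: pselect => // p _; apply: (svalP (h _)).
have hY_inj y y' : A y -> A y' -> hY y = hY y' -> y = y'.
  rewrite /hY; case: pselect => // p _; case: pselect => // p' _.
  by move/sig_inj/hinj/(congr1 sval).
pose Bs y := exists a, A a /\ hY a = y.
pose hinv y := match pselect (Bs y) with left hb => sval (cid hb) | right _ => y end.
have hinvP y : Bs y -> A (hinv y) /\ hY (hinv y) = y.
  by rewrite /hinv; case: pselect => // hb _; case: (cid hb).
pose A' y := A y \/ Bs y.
pose pa x := if `[< A x >] then x else hinv x.
have paA x : A' x -> A (pa x).
  rewrite /pa; case: (asboolP (A x)) => // nA [//|Bx].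
  exact: (hinvP _ Bx).1.
pose ct (p q : bool) := nn (if p then 0 else if q then 1 else 2).
have ct_inj p q p' q' : ~~ (p && q) -> ~~ (p' && q') -> ct p q = ct p' q' ->
    p = p' /\ q = q'.
  by move=> + + /nn_inj; case: p; case: q; case: p'; case: q'.
pose g' a b := if `[< A a >] && `[< A b >] then g a b
  else hY (g (g (pa a) (pa b)) (ct `[< A a >] `[< A b >])).
have pa_inj a a' : A' a -> A' a' -> `[< A a >] = `[< A a' >] -> pa a = pa a' -> a = a'.
  move=> Aa Aa' E; rewrite /pa -E; case: (asboolP (A a)) => // nA e.
  case: Aa => // Ba; case: Aa' => [Aa'|Ba'].
    by move: E; rewrite (asboolT Aa') (asboolF nA).
  by rewrite -(hinvP _ Ba).2 -(hinvP _ Ba').2 e.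
have G' : Good (A', g').
  split => /=.
  - by move=> y /A0A; left.
  - move=> a b Aa Ab; rewrite /g'; case: ifP => [/andP [/asboolP Aa1 /asboolP Ab1]|_].
      by left; apply: gA.
    have H1 := gA _ _ (paA _ Aa) (paA _ Ab).
    by right; eexists; split; [apply: (gA _ _ H1 (c0A _))|reflexivity].
  - move=> a b a' b' Aa Ab Aa' Ab'; rewrite /g'.
    have gin x y p q : A x -> A y -> A (g (g x y) (ct p q)).
      by move=> Ax Ay; apply: (gA _ _ (gA _ _ Ax Ay) (c0A _)).
    case: ifP => [/andP [/asboolP Aa1 /asboolP Ab1]|nab];
    case: ifP => [/andP [/asboolP Aa1' /asboolP Ab1']|nab'].
    + by apply: ginj.
    + move=> e; exfalso; apply: (hY_nA _ (gin _ _ `[< A a' >] `[< A b' >] (paA _ Aa') (paA _ Ab'))).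
      by rewrite -e; apply: gA.
    + move=> e; exfalso; apply: (hY_nA _ (gin _ _ `[< A a >] `[< A b >] (paA _ Aa) (paA _ Ab))).
      by rewrite e; apply: gA.
    + move/(hY_inj _ _ (gin _ _ `[< A a >] `[< A b >] (paA _ Aa) (paA _ Ab)) (gin _ _ `[< A a' >] `[< A b' >] (paA _ Aa') (paA _ Ab'))).
      move=> e; have [e1 e2] := ginj _ _ _ _ (gA _ _ (paA _ Aa) (paA _ Ab)) (c0A _)
        (gA _ _ (paA _ Aa') (paA _ Ab')) (c0A _) e.
      have [e3 e4] := ginj _ _ _ _ (paA _ Aa) (paA _ Ab) (paA _ Aa') (paA _ Ab') e1.
      have [e5 e6] := ct_inj _ _ _ _ (negbT nab) (negbT nab') e2.
      by split; apply: pa_inj.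
have := tmax (exist _ (A', g') G').
case/(_ _)/asboolP.
  apply/asboolP; split=> [y /= hy|a b /= ha hb]; first by left.
  by rewrite /g' (asboolT ha) (asboolT hb).
move=> /= sub _.
have Bc : Bs (hY (nn 0)) by exists (nn 0).
by apply: (hY_nA (nn 0) (c0A 0)); apply: sub; right.
Qed.

End Hess.

Lemma inf_elem C : ~ fin C -> C.
Proof. by move=> /(@ord_le C 1) /cid [f _]; exact: f ord0. Qed.

Lemma prod_map_le A B A' B' : card_le A A' -> card_le B B' -> card_le (A * B) (A' * B').
Proof.
move=> /cid [f fi] /cid [g gi]; exists (fun p => (f p.1, g p.2)).
by move=> [a b] [a' b'] /= [] /fi -> /gi ->.
Qed.

Lemma prod_le A B C : ~ fin C -> card_le A C -> card_le B C -> card_le (A * B) C.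
Proof. by move=> Ci hA hB; apply: cle_trans (prod_map_le hA hB) (hess Ci). Qed.

Lemma prod_ord_le C n : ~ fin C -> card_le (C * 'I_n) C.
Proof. by move=> Ci; apply: prod_le => //; [apply: cle_refl|apply: ord_le]. Qed.

Lemma fun_le C n : ~ fin C -> card_le ('I_n -> C) C.
Proof.
move=> Ci; elim: n => [|n IH].
  have c0 := inf_elem Ci; exists (fun _ => c0) => f g _.
  by apply: funext => -[].
apply: cle_trans (prod_le Ci (cle_refl C) IH).
exists (fun f => (f ord0, fun i => f (lift ord0 i))) => f g /= [e1 e2].
apply: funext => i; case: (unliftP ord0 i) => [j ->|->] //.
by have := congr1 (fun h => h j) e2.
Qed.

Lemma tuple_le S C n : ~ fin C -> card_le S C -> card_le (n.-tuple S) C.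
Proof.
move=> Ci /cid [f fi]; apply: cle_trans (fun_le n Ci).
exists (fun t i => f (tnth t i)) => t t' e; apply: eq_from_tnth => i.
by apply: fi; have := congr1 (fun h => h i) e.
Qed.

Lemma option_le C : ~ fin C -> card_le (option C) C.
Proof.
move=> Ci; have c0 := inf_elem Ci; apply: cle_trans (prod_ord_le 2 Ci).
exists (fun o => if o is Some c then (c, ord0) else (c0, ord_max)).
by move=> [a|] [b|] //= [] ->.
Qed.

Lemma fin_prod A B : fin A -> fin B -> fin (A * B).
Proof.
move=> [M AM] [K BK]; apply: fin_le (prod_map_le AM BK) _; exact: fin_finType.
Qed.

Lemma fin_tuple S n : fin S -> fin (n.-tuple S).
Proof.
move=> [M /cid [f fi]]; apply: (@fin_le _ (n.-tuple 'I_M)); last exact: fin_finType.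
exists (fun t => map_tuple f t) => t t' /(congr1 val) /= /(inj_map fi) e.
exact: val_inj.
Qed.

Lemma fin_option S : fin S -> fin (option S).
Proof.
move=> [M /cid [f fi]]; apply: (@fin_le _ (option 'I_M)); last exact: fin_finType.
by exists (omap f) => [[a|] [b|]] //= [] /fi ->.
Qed.

Lemma prod_fin_le C B : ~ fin C -> fin B -> card_le (C * B) C.
Proof.
move=> Ci [M BM]; apply: prod_le => //; first exact: cle_refl.
by apply: cle_trans BM (ord_le _ Ci).
Qed.

Section Img.
Variables (T Y : Type) (f : T -> Y) (U : T -> Prop).
Hypothesis fi : injective f.
Lemma img_le1 : card_le {t | U t} {y | exists t, U t /\ f t = y}.
Proof.
exists (fun t => exist _ (f (sval t)) (ex_intro _ (sval t) (conj (svalP t) erefl))).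
by move=> [t p] [t' p'] /(congr1 sval) /= /fi e; apply: sig_inj.
Qed.
Lemma img_le2 : card_le {y | exists t, U t /\ f t = y} {t | U t}.
Proof.
exists (fun y => exist U (sval (cid (proj2_sig y))) (proj1 (svalP (cid (proj2_sig y))))).
move=> [y p] [y' p'] /(congr1 sval) /= e; apply: sig_inj => /=.
have e' : sval (cid p) = sval (cid p') := e.
by rewrite -(proj2 (svalP (cid p))) -(proj2 (svalP (cid p'))) e'.
Qed.
End Img.

Lemma chain_anti m A A' Y : card_le A' A -> chain m A Y -> chain m A' Y.
Proof.
case: m => [|m] /= h; first by move=> c; apply: cle_lt_trans h c.
by move=> [S [c ch]]; exists S; split => //; apply: cle_lt_trans h c.
Qed.

Lemma chain_mono m A Y Y' : card_le Y' Y -> chain m A Y' -> chain m A Y.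
Proof.
move=> hY; elim: m A => [|m IH] A; first by move=> c; apply: clt_le_trans c hY.
case: hY => f fi [S [c ch]].
exists (fun y => exists t, S t /\ f t = y); split.
  by apply: clt_le_trans c (@img_le1 _ _ f _ fi).
have h2 := (@img_le2 _ _ f S).
have h3 := IH _ ch.
exact: (chain_anti h2 h3).
Qed.

Lemma chain_snoc m A Y (S : Y -> Prop) :
  chain m A {x | S x} -> card_lt {x | S x} Y -> chain m.+1 A Y.
Proof.
elim: m A => [|m IH] A; first by move=> c1 c2; exists S.
move=> [U [c ch]] lt; have := IH _ ch lt.
pose f (u : {x | S x}) := sval u.
have fi : injective f by apply: sig_inj.
move=> ch2; exists (fun y => exists t, U t /\ f t = y); split.
  by apply: clt_le_trans c (@img_le1 _ _ f _ fi).
by apply: chain_anti (@img_le2 _ _ f _) ch2.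
Qed.

Lemma chain_fin X m : ~ fin X -> forall A, fin A -> chain m A X.
Proof.
move=> Xi; elim: m => [|m IH] A [M AM] /=.
  split; first by apply: cle_trans AM (ord_le _ Xi).
  by move=> XA; apply: Xi; exists M; apply: cle_trans XA AM.
have [g gi] := cid (@ord_le X M.+1 Xi).
pose S x := exists i, g i = x.
have IS : card_le 'I_M.+1 {x | S x}.
  exists (fun i => exist S (g i) (ex_intro _ i erefl)).
  by move=> i j /(congr1 sval) /= /gi.
exists S; split; first split.
- apply: cle_trans AM _; apply: cle_trans IS; exists (widen_ord (leqnSn M)).
  by move=> i j /(congr1 val) /= /val_inj.
- move=> SA; have := cle_ord (cle_trans IS (cle_trans SA AM)).
  by rewrite ltnn.
- apply: IH; exists M.+1.
  exists (fun s : {x | S x} => sval (cid (proj2_sig s))) => [[x p] [y q]] /= e.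
  apply: sig_inj => /=.
  have e' : sval (cid p) = sval (cid q) := e.
  by rewrite -(svalP (cid p)) -(svalP (cid q)) e'.
Qed.

Lemma small n : forall T : Type, ~ (exists g : 'I_n -> T, injective g) -> card_le T 'I_n.
Proof.
elim: n => [|n IH] T H.
  have f : 'I_0 -> T by case => m; rewrite ltn0.
  by case: H; exists f => -[].
case: (pselect (inhabited T)) => [[t]|nT]; last first.
  exists (fun x => False_rect _ (nT (inhabits x))) => x.
  by case: (nT (inhabits x)).
pose T' := {x : T | x <> t}.
have nT' : ~ (exists g : 'I_n -> T', injective g).
  move=> [g gi]; apply: H.
  exists (fun i => if unlift ord_max i is Some j then sval (g j) else t) => i i'.
  case: (unliftP ord_max i) => [j ->|->]; case: (unliftP ord_max i') => [j' ->|->] //.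
  - by move/sig_inj/gi => ->.
  - by move=> e; case: (svalP (g j)).
  - by move=> e; case: (svalP (g j')).
have [k ki] := cid (IH _ nT').
exists (fun x => match pselect (x = t) with
  | left _ => ord_max | right h => lift ord_max (k (exist _ x h)) end) => x y.
case: pselect => [->|hx]; case: pselect => [->|hy] //.
- by move=> e; have := neq_lift ord_max (k (exist _ y hy)); rewrite -e eqxx.
- by move=> e; have := neq_lift ord_max (k (exist _ x hx)); rewrite e eqxx.
- by move/lift_inj/ki/(congr1 sval).
Qed.

Lemma pigeon (S A : Type) n (f : S -> A) : ~ card_le S (A * 'I_n.+1) ->
  exists c, exists g : 'I_n.+1 -> S, injective g /\ forall i, f (g i) = c.
Proof.
move=> nle; apply: contrapT => H; apply: nle.
have kk c : {k : {s | f s = c} -> 'I_n.+1 | injective k}.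
  apply: cid; apply: small => -[g gi]; apply: H; exists c.
  exists (fun i => sval (g i)); split; first by move=> i j /sig_inj /gi.
  by move=> i; apply: (svalP (g i)).
pose kk' c s := match pselect (f s = c) with
  | left p => sval (kk c) (exist _ s p) | right _ => ord0 end.
have kk'P c s s' : f s = c -> f s' = c -> kk' c s = kk' c s' -> s = s'.
  move=> e e'; rewrite /kk'; case: pselect => // p; case: pselect => // p'.
  by move/(svalP (kk c))/(congr1 sval).
exists (fun s => (f s, kk' (f s) s)) => s s' [] e.
by rewrite -e; apply: kk'P.
Qed.

Section Grid.
Variables (d : nat) (X : Type) (x0 : X) (n : nat).

Fixpoint Big (m : nat) (A : Type) : Prop :=
  match m with
  | 0 => exists S : X -> Prop, ~ card_le {x | S x} (A * 'I_n.+1)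
  | m'.+1 => exists S : X -> Prop, ~ card_le {x | S x} (A * 'I_n.+1) /\
        Big m' (A * (n.+1).-tuple {x | S x})
  end.

Definition gridpt (js : seq 'I_d) (F : 'I_d -> 'I_n.+1 -> X) (r : 'I_d -> 'I_n.+1) :
  'I_d -> X := fun i => if i \in js then F i (r i) else x0.

Lemma grid m : forall (js : seq 'I_d) (A : Type), uniq js -> size js = m.+1 ->
  Big m A -> forall phi : ('I_d -> X) -> A,
  exists F c, (forall j, j \in js -> injective (F j)) /\
    forall r, phi (gridpt js F r) = c.
Proof.
elim: m => [|m IH] js A.
  case: js => [|j [|j' js]] //= _ _ [S nS] phi.
  pose f (s : {x | S x}) := phi (fun i => if i \in [:: j] then sval s else x0).
  have [c [g [gi gc]]] := pigeon f nS.
  exists (fun _ i => sval (g i)), c; split.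
    by move=> _ _ i i' /sig_inj /gi.
  move=> r; rewrite -(gc (r j)) /f /gridpt; congr phi; apply: funext => i.
  by case: ifP => //; rewrite inE => /eqP ->.
case: js => [//|j js] /= /andP [jn ujs] [sz] [S [nS Bg]] phi.
pose upd (q : 'I_d -> X) (v : X) := fun i => if i == j then v else q i.
pose fq q (s : {x | S x}) := phi (upd q (sval s)).
have PG q : {cg : A * ('I_n.+1 -> {x | S x}) | injective cg.2 /\ forall i, fq q (cg.2 i) = cg.1}.
  apply: cid; have [c [g [gi gc]]] := pigeon (fq q) nS.
  by exists (c, g).
pose psi q := ((sval (PG q)).1, [tuple (sval (PG q)).2 i | i < n.+1]).
have [F' [[c t] [F'i F'c]]] := IH js _ ujs sz Bg psi.
exists (fun i => if i == j then (fun l => sval (tnth t l)) else F' i), c; split.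
  move=> i; rewrite inE; case: eqP => [-> _|_ /= ijs]; last exact: F'i.
  pose q := gridpt js F' (fun _ => ord0).
  have := F'c (fun _ => ord0); rewrite /psi => -[_ <-] l l'.
  rewrite !tnth_mktuple => /sig_inj; apply: (proj1 (svalP (PG q))).
move=> r; pose q := gridpt js F' r.
have := F'c r; rewrite /psi => -[<- et].
rewrite -(proj2 (svalP (PG q)) (r j)) /fq; congr phi; apply: funext => i.
rewrite /upd /gridpt inE; case: eqP => [->|nij] /=.
  by rewrite -et tnth_mktuple.
by [].
Qed.

End Grid.

Lemma fin_img (X : Type) N (g : 'I_N -> X) : fin {x | exists i, g i = x}.
Proof.
exists N; exists (fun s : {x | exists i, g i = x} => sval (cid (proj2_sig s))) => [[x p] [y q]] /= e.
apply: sig_inj => /=; have e' : sval (cid p) = sval (cid q) := e.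
by rewrite -(svalP (cid p)) -(svalP (cid q)) e'.
Qed.

Lemma le_img (X : Type) N (g : 'I_N -> X) : injective g -> card_le 'I_N {x | exists i, g i = x}.
Proof.
move=> gi; exists (fun i => exist (fun x => exists i, g i = x) (g i) (ex_intro _ i erefl)).
by move=> i j /(congr1 sval) /= /gi.
Qed.

Section Bigs.
Variables (X : Type) (n : nat).

Lemma big_inf m : forall A : Type, ~ fin A -> chain m A X -> Big X n m A.
Proof.
elim: m => [|m IH] A Ai.
  move=> [AX nXA]; exists (fun _ => True) => le; apply: nXA.
  apply: cle_trans (prod_ord_le _ Ai); apply: cle_trans le.
  by exists (fun x => exist (fun _ => True) x I) => x y /(congr1 sval).
move=> [S [[AS nSA] ch]]; exists S; split.
  by move=> le; apply: nSA; apply: cle_trans le (prod_ord_le _ Ai).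
have Si : ~ fin {x | S x} by apply: inf_le AS Ai.
apply: IH.
  apply: inf_le Ai; exists (fun a => (a, [tuple inf_elem Si | i < n.+1])).
  by move=> a b [].
apply: chain_anti ch; apply: prod_le => //; apply: tuple_le => //; exact: cle_refl.
Qed.

Lemma big_fin m : ~ fin X -> forall A : Type, fin A -> Big X n m A.
Proof.
move=> Xi; elim: m => [|m IH] A [M AM].
- have [g gi] := cid (@ord_le X (M * n.+1).+1 Xi).
  exists (fun x => exists i, g i = x) => le.
  have := cle_ord (cle_trans (le_img gi) (cle_trans le (cle_trans (prod_map_le AM (cle_refl _))
     (ex_intro _ (@enum_rank ('I_M * 'I_n.+1)%type) (@enum_rank_inj _))))).
  by rewrite card_prod !card_ord ltnn.
- have [g gi] := cid (@ord_le X (M * n.+1).+1 Xi).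
  exists (fun x => exists i, g i = x); split.
    move=> le.
    have := cle_ord (cle_trans (le_img gi) (cle_trans le (cle_trans (prod_map_le AM (cle_refl _))
       (ex_intro _ (@enum_rank ('I_M * 'I_n.+1)%type) (@enum_rank_inj _))))).
    by rewrite card_prod !card_ord ltnn.
  apply: IH; apply: fin_prod; first by exists M.
  by apply: fin_tuple; apply: fin_img.
Qed.

End Bigs.

Section U.
Variables (d : nat) (C : Type).
Hypotheses (Ci : ~ fin C) (d0 : 0 < d).

Definition Gc (m : nat) (Y : Type) : Prop :=
  exists (phi : ('I_d -> Y) -> C) (iota : C -> {set 'I_d}),
    (forall c, #|iota c| <= m) /\
    forall p q, phi p = phi q -> (forall i, i \in iota (phi p) -> p i = q i) -> p = q.

Lemma G_pull m Y Y' : card_le Y Y' -> Gc m Y' -> Gc m Y.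
Proof.
move=> [h hi] [phi [iota [Hc Hp]]].
exists (fun p => phi (fun i => h (p i))), iota; split => // p q e agr.
have := Hp _ _ e (fun i hi' => congr1 h (agr i hi')).
by move=> E; apply: funext => i; apply: hi; have := congr1 (fun f => f i) E.
Qed.

Lemma G_base m Y : card_le Y C -> Gc m Y.
Proof.
move=> [h hi]; have [k ki] := cid (fun_le d Ci).
exists (fun p => k (fun i => h (p i))), (fun _ => set0); split.
  by move=> c; rewrite cards0.
move=> p q /ki E _; apply: funext => i; apply: hi.
by have := congr1 (fun f => f i) E.
Qed.

Lemma exists_max (Y : Type) (R : Y -> Y -> Prop) :
  (forall a b, R a b \/ R b a) -> (forall a b c, R a b -> R b c -> R a c) ->
  forall p : 'I_d -> Y, exists j, forall i, R (p i) (p j).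
Proof.
move=> tot tr p.
suff [j Hj] : exists j, forall i, i \in enum 'I_d -> R (p i) (p j).
  by exists j => i; apply: Hj; rewrite mem_enum.
elim: (enum 'I_d) => [|a s [j Hj]]; first by exists (Ordinal d0).
case: (tot (p a) (p j)) => h.
  by exists j => i; rewrite inE => /orP [/eqP ->|]; [|apply: Hj].
exists a => i; rewrite inE => /orP [/eqP ->|/Hj hij]; last exact: tr hij h.
by case: (tot (p a) (p a)).
Qed.

Lemma G_step m (Y : Type) (R : Y -> Y -> Prop) :
  (forall a b, R a b \/ R b a) -> (forall a b c, R a b -> R b c -> R a c) ->
  (forall y, Gc m {z | R z y}) -> Gc m.+1 Y.
Proof.
move=> tot tr Hy.
have Rrefl y : R y y by case: (tot y y).
have [mx mxP] : {mx : ('I_d -> Y) -> 'I_d | forall p i, R (p i) (p (mx p))}.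
  exists (fun p => sval (cid (exists_max tot tr p))) => p.
  exact: (svalP (cid (exists_max tot tr p))).
have HG y : {pr : (('I_d -> {z | R z y}) -> C) * (C -> {set 'I_d}) |
   (forall c, #|pr.2 c| <= m) /\ forall p q, pr.1 p = pr.1 q ->
     (forall i, i \in pr.2 (pr.1 p) -> p i = q i) -> p = q}.
  by apply: cid; have [phi [iota H]] := Hy y; exists (phi, iota).
pose clamp y z : {z | R z y} := match pselect (R z y) with
  | left h => exist _ z h | right _ => exist _ y (Rrefl y) end.
have clampK y z : R z y -> sval (clamp y z) = z.
  by rewrite /clamp; case: pselect.
pose trip p : 'I_d * C * {set 'I_d} :=
  let j := mx p in let y := p j in
  let c := (sval (HG y)).1 (fun i => clamp y (p i)) in (j, c, (sval (HG y)).2 c).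
have [e ei] : card_le ('I_d * C * {set 'I_d}) C.
  apply: prod_le => //; first by apply: prod_le => //; [apply: ord_le|apply: cle_refl].
  have [M FM] := @fin_finType {set 'I_d}.
  by apply: cle_trans FM (ord_le _ Ci).
pose Phi p := e (trip p).
pose Iota c := match pselect (exists p, Phi p = c) with
  | left h => let p := sval (cid h) in (trip p).1.1 |: (trip p).2
  | right _ => set0 end.
have IotaE p : Iota (Phi p) = (trip p).1.1 |: (trip p).2.
  rewrite /Iota; case: pselect => [h|[]]; last by exists p.
  by rewrite (ei _ _ (svalP (cid h))).
exists Phi, Iota; split.
  move=> c; rewrite /Iota; case: pselect => [h|_]; last by rewrite cards0.
  rewrite cardsU1; set p := sval _.
  have := proj1 (svalP (HG (p (mx p)))) ((sval (HG (p (mx p)))).1 (fun i => clamp (p (mx p)) (p i))).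
  by case: (_ \notin _) => /=; rewrite ?add1n ?add0n // => /leqW.
move=> p q E; rewrite IotaE => agr.
have := ei _ _ E; rewrite /trip => -[e1 e2 e3].
have Hj : p (mx p) = q (mx p) by apply: agr; rewrite setU11.
rewrite -e1 -Hj in e2 e3.
set y := p (mx p) in Hj e2 e3 agr.
pose p' i := clamp y (p i); pose q' i := clamp y (q i).
have E' : p' = q'.
  apply: (proj2 (svalP (HG y))) => //.
  move=> i hi; rewrite /p' /q' agr //=; apply/setU1P; right; exact: hi.
apply: funext => i.
rewrite -(clampK y (p i) (mxP p i)) -(clampK y (q i)); last first.
  by rewrite Hj e1; apply: mxP.
by congr sval; exact: (congr1 (fun f => f i) E').
Qed.
End U.

Lemma wo_reduce (Y : Type) : ~ fin Y -> exists (Y' : Type) (R : Y' -> Y' -> Prop),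
  [/\ card_le Y Y', card_le Y' Y, (forall a b, R a b \/ R b a),
      (forall a b c, R a b -> R b c -> R a c) & forall y, ~ card_le Y' {z | R z y}].
Proof.
move=> Yi.
pose W := {classic Y}.
have [R wo] := wochoice.well_ordering_principle W.
have minl (s : seq W) x : x \in s -> exists z, z \in s /\ forall w, w \in s -> R z w.
  move=> xs; have [|z [[zs lb] _]] := wo [mem s]; first by exists x.
  by exists z; split => // w ws; apply: lb.
have tot a b : R a b \/ R b a.
  have [z [zs lb]] := minl [:: a; b] a (mem_head _ _).
  move: zs lb; rewrite !inE => /orP [/eqP ->|/eqP ->] lb.
    by left; apply: lb; rewrite !inE eqxx orbT.
  by right; apply: lb; rewrite !inE eqxx.
have refl a : R a a by case: (tot a a).
have anti a b : R a b -> R b a -> a = b.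
  move=> ab ba; have [|z [[zs lb] uniqz]] := wo [mem [:: a; b]].
    by exists a; rewrite !inE eqxx.
  have ma : wochoice.minimum_of R [mem [:: a; b]] a.
    split; first by rewrite !inE eqxx.
    by move=> w; rewrite !inE => /orP [/eqP ->|/eqP ->].
  have mb : wochoice.minimum_of R [mem [:: a; b]] b.
    split; first by rewrite !inE eqxx orbT.
    by move=> w; rewrite !inE => /orP [/eqP ->|/eqP ->].
  by rewrite -(uniqz _ ma) -(uniqz _ mb).
have trans a b c : R a b -> R b c -> R a c.
  move=> ab bc; have [z [zs lb]] := minl [:: a; b; c] a (mem_head _ _).
  move: zs lb; rewrite !inE => /or3P [/eqP ->|/eqP ->|/eqP ->] lb.
  - by apply: lb; rewrite !inE eqxx !orbT.
  - have ba : R b a by apply: lb; rewrite !inE eqxx.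
    by rewrite (anti _ _ ab ba).
  - have cb : R c b by apply: lb; rewrite !inE eqxx ?orbT.
    by rewrite -(anti _ _ bc cb).
pose B : {pred W} := fun y => `[< card_le Y {z : W | R z y} >].
case: (pselect (exists y, y \in B)) => [hB|nB]; last first.
  exists Y, (fun a b => R a b); split.
  - exact: cle_refl.
  - exact: cle_refl.
  - exact: tot.
  - exact: trans.
  - by move=> y le; apply: nB; exists y; rewrite unfold_in; apply/asboolP.
have [y0 [[By0 lb0] _]] := wo B hB.
pose Y' := {z : W | R z y0 && (z != y0)}.
have leY'Y : card_le Y' Y by exists sval; apply: sig_inj.
have le1 : card_le {z : W | R z y0} (option Y').
  exists (fun z => match pselect (sval z = y0) with
     | left _ => None
     | right h => Some (exist (fun z => R z y0 && (z != y0)) (sval z)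
          (introT andP (conj (svalP z) (introN eqP h)))) end).
  move=> [z hz] [w hw] /=; case: pselect => [e1|n1]; case: pselect => [e2|n2] //=.
  - by move=> _; apply: sig_inj; rewrite /= e1 e2.
  - by move=> [e]; apply: sig_inj.
have le0 : card_le Y {z : W | R z y0}.
  by move: By0; rewrite unfold_in => /asboolP.
have Y'i : ~ fin Y'.
  by move=> fY'; apply: Yi; apply: fin_le (cle_trans le0 le1) (fin_option fY').
have leYY' : card_le Y Y' := cle_trans le0 (cle_trans le1 (option_le Y'i)).
exists Y', (fun a b => R (sval a) (sval b)); split => //.
- by move=> a b c; apply: trans.
move=> z le.
have : sval z \in B.
  rewrite unfold_in; apply/asboolP; apply: cle_trans leYY' (cle_trans le _).
  exists (fun w => exist (fun x : W => R x (sval z)) (sval (sval w)) (svalP w)).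
  by move=> [[a ha] ra] [[b hb] rb] /(congr1 sval) /= e; apply: sig_inj; apply: sig_inj.
move/lb0 => h; case/andP: (svalP z) => h1 /eqP; apply.
exact: anti.
Qed.

Lemma U_main d (C : Type) (Ci : ~ fin C) (d0 : 0 < d) m :
  forall Y : Type, ~ chain m C Y -> Gc d C m Y.
Proof.
elim: m => [|m IH] Y H.
  case: (pselect (card_le Y C)) => [YC|nYC]; first exact: G_base.
  exfalso; apply: H; split => //; by case: (compare_or C Y).
case: (pselect (card_le Y C)) => [YC|nYC]; first exact: G_base.
have CY : card_le C Y by case: (compare_or C Y).
have Yi : ~ fin Y := inf_le CY Ci.
have [Y' [R [YY' Y'Y tot tr sm]]] := wo_reduce Yi.
apply: G_pull YY' _; apply: (G_step Ci d0 tot tr) => y.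
apply: IH => ch; apply: H; apply: chain_mono Y'Y _; apply: chain_snoc ch _.
split; last exact: sm.
by exists sval; apply: sig_inj.
Qed.

Section EP.
Variables (d : nat) (P : seq (d.-tuple nat)).

Lemma distP (I : {set 'I_d}) : distinguisher d P I -> forall x y, x \in P -> y \in P -> x != y ->
  exists2 i, i \in I & tnth x i != tnth y i.
Proof.
move=> /allP H x y xP yP nxy; have /allP /(_ y yP) := H x xP.
by rewrite (negbTE nxy) /= => /existsP [i /andP [iI ne]]; exists i.
Qed.

Lemma distI (I : {set 'I_d}) : (forall x y, x \in P -> y \in P -> x != y ->
  exists2 i, i \in I & tnth x i != tnth y i) -> distinguisher d P I.
Proof.
move=> H; apply/allP => x xP; apply/allP => y yP.
case: eqP => //= /eqP nxy; have [i iI ne] := H x y xP yP nxy.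
by apply/existsP; exists i; rewrite iI ne.
Qed.

Lemma big_min_le (T : eqType) (s : seq T) (Q : pred T) (Fn : T -> nat) i0 :
  i0 \in s -> Q i0 -> \big[minn/d]_(i <- s | Q i) Fn i <= Fn i0.
Proof.
elim: s => // a s IH; rewrite inE big_cons => /orP [/eqP <- ->|/IH h /h].
  exact: geq_minl.
by case: (Q a) => // h'; apply: leq_trans h'; exact: geq_minr.
Qed.

Lemma big_min_att (T : eqType) (s : seq T) (Q : pred T) (Fn : T -> nat) :
  \big[minn/d]_(i <- s | Q i) Fn i = d \/
  exists i, [/\ i \in s, Q i & \big[minn/d]_(i <- s | Q i) Fn i = Fn i].
Proof.
elim: s => [|a s IH]; first by left; rewrite big_nil.
rewrite big_cons; case Qa: (Q a); last first.
  case: IH => [->|[i [iS Qi e]]]; first by left.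
  by right; exists i; split => //; rewrite inE iS orbT.
case: (leqP (Fn a) (\big[minn/d]_(i <- s | Q i) Fn i)) => h.
  by right; exists a; split; [rewrite inE eqxx | exact: Qa | ].
case: IH => [->|[i [iS Qi e]]]; first by left.
by right; exists i; split => //; rewrite inE iS orbT.
Qed.

Lemma eP_le (I : {set 'I_d}) : distinguisher d P I -> eP d P <= #|I|.
Proof. by move=> dI; apply: big_min_le => //; rewrite mem_index_enum. Qed.

Lemma eP_att : exists J, distinguisher d P J /\ #|J| = eP d P.
Proof.
case: (big_min_att (index_enum {set 'I_d}) (distinguisher d P) (fun I => #|I|)).
  move=> e; exists setT; split; last by rewrite cardsT card_ord /eP e.
  apply: distI => x y _ _ nxy; apply: contrapT => H; case/eqP: nxy.
  apply: eq_from_tnth => i; apply/eqP; apply: contrapT => ne.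
  by apply: H; exists i; rewrite ?inE //; apply/negP.
by move=> [J [_ dJ e]]; exists J; split => //; rewrite /eP e.
Qed.

End EP.

Lemma two_elems d k (P : seq (d.-tuple nat)) : 2 <= k -> is_template d k P ->
  exists x y, [/\ x \in P, y \in P & x != y].
Proof.
move=> k2 [uP sP]; case: P uP sP => [|x [|y P]] //=; try by move=> _ e; rewrite -e in k2.
move=> /andP [nx _] _; exists x, y; split; rewrite ?inE ?eqxx ?orbT //.
by apply: contraNneq nx => ->; rewrite inE eqxx.
Qed.

Lemma d_pos d (x y : d.-tuple nat) : x != y -> 0 < d.
Proof.
case: d x y => // x y; case/negP.
by apply/eqP; apply: eq_from_tnth => -[].
Qed.

Theorem corollary2p2 (d k : nat) (X : Type) (Pc : seq (d.-tuple nat) -> Prop) :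
  2 <= k ->
  (forall P, Pc P -> is_template d k P) ->
  infinite X ->
  ((forall P, ~ Pc P) ->
     forall C : Type, has_proper_coloring d X Pc C <-> inhabited C) /\
  (forall e : nat,
     (exists P, Pc P /\ eP d P = e) ->
     (forall P, Pc P -> e <= eP d P) ->
     forall C : Type, has_proper_coloring d X Pc C <-> ~ chain (e - 1) C X).
Proof.
move=> k2 Htemp Xinf.
have Xi := inf_fin Xinf.
have x0 := inf_elem Xi.
split.
  move=> nP C; split.
    by move=> [phi _]; exact: (inhabits (phi (fun _ => x0))).
  by move=> [c]; exists (fun _ => c) => Q [P [f [PcP _]]]; case: (nP P).
move=> e [P0 [PcP0 eP0]] emin C.
have [x [y [xP yP nxy]]] := two_elems k2 (Htemp _ PcP0).
have d0 : 0 < d by apply: d_pos nxy.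
have [J [dJ cJ]] := eP_att P0.
have e0 : 0 < e.
  rewrite -eP0 -cJ card_gt0; apply/set0Pn.
  have [i iJ _] := distP dJ xP yP nxy; by exists i.
split.
-
  move=> [phi proper] ch.
  pose n := \max_(z <- P0) \max_(i < d) tnth z i.
  have bound z i : z \in P0 -> tnth z i < n.+1.
    move=> zP; rewrite ltnS.
    have h1 : tnth z i <= \max_(i0 < d) tnth z i0 := @leq_bigmax _ (fun i0 => tnth z i0) i.
    have h2 : \max_(i0 < d) tnth z i0 <= n.
      by rewrite /n; apply: (@leq_bigmax_seq _ P0 (fun _ => true) (fun z => \max_(i0 < d) tnth z i0) z zP isT).
    exact: leq_trans h1 h2.
  have Bg : Big X n (e - 1) C.
    case: (pselect (fin C)) => [fC|nfC]; first exact: big_fin.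
    exact: big_inf.
  have ujs : uniq (enum J) := enum_uniq _.
  have sjs : size (enum J) = (e - 1).+1 by rewrite -cardE cJ eP0 subn1 prednK.
  have [F [c [Finj Fc]]] := grid x0 ujs sjs Bg phi.
  pose f (z : d.-tuple nat) := gridpt x0 (enum J) F (fun i => inord (tnth z i)).
  apply: (proper (fun q => exists2 z, z \in P0 & q = f z)); last first.
    by exists c => q [z _ ->]; apply: Fc.
  exists P0, f; split => //; split => //; split.
    move=> z w zP wP e1; apply/eqP; apply: contraT => nzw.
    have [i iJ ne] := distP dJ zP wP nzw; case/negP: ne; apply/eqP.
    have := congr1 (fun h => h i) e1; rewrite /f /gridpt mem_enum iJ.
    move/Finj; rewrite mem_enum => /(_ iJ) /(congr1 val).
    by rewrite /= !inordK ?bound.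
  by move=> z w i _ _ e1; rewrite /f /gridpt e1.
-
  move=> nch.
  have Ci : ~ fin C by move=> fC; apply: nch; apply: chain_fin.
  have [phi [iota [Hc Hp]]] := U_main Ci d0 nch.
  exists phi => Q [P [f [PcP [[finj fpres] Qiff]]]] [c mono].
  have dI : distinguisher d P (iota c).
    apply: distI => z w zP wP nzw; apply: contrapT => H; case/negP: nzw.
    apply/eqP; apply: finj => //; apply: Hp.
      by rewrite !mono // Qiff; [exists w | exists z].
    move=> i; rewrite (mono (f z)); last by rewrite Qiff; exists z.
    move=> iI; apply: fpres => //; apply: contrapT => ne; apply: H.
    by exists i => //; apply/eqP.
  have := leq_trans (eP_le dI) (Hc c).
  have := emin P PcP.
  move=> h1 h2; have := leq_trans h1 h2; rewrite leqNgt subn1 ltn_predL e0.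
  by [].
Qed.
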